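(* Let $S$ be the topological space consisting of a convergent sequence of distinct points $s_1, s_2, \dots$ together with its limit $s_0$ (i.e. $S$ is homeomorphic to $\{0\} \cup \{1/k : k \geq 1\} \subset \mathbb{R}$ with the subspace topology). Then the Milnor-Thurston homology groups of $S$ satisfy $\mathcal{H}_n(S) = 0$ for all $n > 0$, and $\mathcal{H}_0(S) \cong \ell^1$ as real vector spaces, where $\ell^1 = \{(a_k)_{k \geq 0} : a_k \in \mathbb{R},\ \sum_{k=0}^\infty |a_k| < \infty\}$.
   Context: Milnor-Thurston (measure) homology: for a topological space $X$ and integer $k \geq 0$, let $C^0(\Delta^k, X)$ be the space of continuous maps from the standard $k$-simplex $\Delta^k$ to $X$ (singular simplices), with the compact-open topology. A (signed) measure is a $\sigma$-additive real-valued set function vanishing on the empty set. A carrier of a Borel measure $\mu$ on $C^0(\Delta^k,X)$ is a set $D$ such that every Borel subset of the complement of $D$ has measure zero. $\mathcal{C}_k(X)$ is the real vector space of finite signed Borel measures on $C^0(\Delta^k,X)$ admitting a compact carrier. For a continuous map $f$ between such spaces, the image measure is $(f\mu)(A) = \mu(f^{-1}(A))$. The boundary $\partial : \mathcal{C}_k(X) \to \mathcal{C}_{k-1}(X)$ is $\partial = \sum_{i=0}^k (-1)^i \partial_i$, where $\partial_i \mu$ is the image measure of $\mu$ under $\sigma \mapsto \sigma \circ \delta_i$, with $\delta_i : \Delta^{k-1} \to \Delta^k$ the standard inclusion of the $i$-th face. $(\mathcal{C}_*(X), \partial)$ is a chain complex and its homology $\mathcal{H}_*(X)$ (real vector spaces)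 is the Milnor-Thurston homology of $X$. *)

(* Defs.v *)
From HB Require Import structures.
From mathcomp Require Import all_boot all_order all_algebra.
From mathcomp Require Import all_classical all_reals all_analysis.
Unset Printing Implicit Defensive.
Import Order.TTheory GRing.Theory Num.Theory.
Import numFieldNormedType.Exports.
Local Open Scope classical_set_scope.
Local Open Scope ring_scope.

Section MilnorThurston.
Variable R : realType.

Definition simplex_set (k : nat) : set 'rV[R]_(k.+1) :=
  [set x | (forall i, 0 <= x ord0 i) /\ \sum_i x ord0 i = 1].

(** Delta^k with the subspace topology (initial topology of the inclusion). *)
Definition Delta (k : nat) : Type := set_type (@simplex_set k).

(** Standard inclusion of the i-th face R^(k+1) -> R^(k+2):
    insert a 0 coordinate at position i. *)
Definition face_row (k : nat) (i : 'I_(k.+2)) (x : 'rV[R]_(k.+1)) : 'rV[R]_(k.+2) :=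
  \row_j (if unlift i j is Some j' then x ord0 j' else 0).

Lemma face_row_simplex k (i : 'I_(k.+2)) (x : 'rV[R]_(k.+1)) :
  x \in simplex_set k -> face_row k i x \in simplex_set k.+1.
Proof.
rewrite !inE => -[x0 x1]; split.
  by move=> j; rewrite mxE; case: unlift.
rewrite (bigD1_ord i) //= mxE unlift_none add0r -x1.
by apply: eq_bigr => j _; rewrite mxE liftK.
Qed.

Definition delta (k : nat) (i : 'I_(k.+2)) (x : Delta k) : Delta k.+1 :=
  exist _ (face_row k i (sval x)) (face_row_simplex k i (sval x) (svalP x)).

HB.instance Definition _ k := Topological.on (Delta k).

Definition SingSimp (k : nat) (X : topologicalType) : Type :=
  set_type [set f : {compact-open, Delta k -> X} | continuous f].

HB.instance Definition _ k X := Topological.on (SingSimp k X).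

Definition borel {T : topologicalType} (A : set T) : Prop :=
  <<s [set U : set T | open U] >> A.

(** A (real-valued, hence finite) signed Borel measure on T, represented by a
    set function whose values on non-Borel sets are irrelevant. *)
Definition signed_borel_measure {T : topologicalType} (mu : set T -> R) : Prop :=
  mu set0 = 0 /\
  forall F : nat -> set T, (forall n, borel (F n)) -> trivIset setT F ->
    (fun n => \sum_(i < n) mu (F i)) @ \oo --> mu (\bigcup_n F n).

Definition carrier {T : topologicalType} (mu : set T -> R) (D : set T) : Prop :=
  forall B, borel B -> B `<=` ~` D -> mu B = 0.

Definition MTchain {k : nat} {X : topologicalType} (mu : set (SingSimp k X) -> R) : Prop :=
  signed_borel_measure mu /\ exists D, compact D /\ carrier mu D.

Definition meq {T : topologicalType} (mu nu : set T -> R) : Prop :=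
  forall A, borel A -> mu A = nu A.

(** Preimage of A under sigma |-> sigma o delta_i (C^0(Delta^(k+1),X) -> C^0(Delta^k,X)). *)
Definition face_preim {k : nat} {X : topologicalType} (i : 'I_(k.+2))
    (A : set (SingSimp k X)) : set (SingSimp k.+1 X) :=
  [set s | exists t : SingSimp k X, A t /\
     forall x : Delta k, (sval t : Delta k -> X) x = (sval s : Delta k.+1 -> X) (delta k i x)].

Definition MTboundary {k : nat} {X : topologicalType} (mu : set (SingSimp k.+1 X) -> R) :
    set (SingSimp k X) -> R :=
  fun A => \sum_(i < k.+2) (-1) ^+ i * mu (face_preim i A).

Definition S_set : set R := [set x | x = 0 \/ exists k : nat, x = (k.+1%:R)^-1].
Definition S : Type := set_type S_set.

HB.instance Definition _ := Topological.on S.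

Definition ell1 (a : nat -> R) : Prop :=
  cvg ((fun n => \sum_(k < n) `|a k|) @ \oo).

End MilnorThurston.


Arguments signed_borel_measure {R T} mu.
Arguments carrier {R T} mu D.
Arguments MTchain {R k X} mu.
Arguments meq {R T} mu nu.
Arguments face_preim {R k X} i A.
Arguments MTboundary {R k X} mu A.
Arguments ell1 {R} a.

(* Main.v *)
Require Import Defs.
From HB Require Import structures.
From mathcomp Require Import all_boot all_order all_algebra.
From mathcomp Require Import all_classical all_reals all_analysis.
Import Order.TTheory GRing.Theory Num.Theory.
Import numFieldNormedType.Exports.
Local Open Scope classical_set_scope.
Local Open Scope ring_scope.

Section A.
Context {R : realType}.

Definition ptv (k : nat) : R := if k is k'.+1 then (k'.+1%:R)^-1 else 0.

Lemma ptvP k : ptv k \in S_set R.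
Proof. by apply/mem_set; case: k => [|k]; [left|right; exists k]. Qed.

Definition pt k : S R := exist _ (ptv k) (ptvP k).

Lemma ptv_gt0 k : 0 < ptv k.+1.
Proof. by rewrite /= invr_gt0 ltr0n. Qed.

Lemma ptv_inj : injective ptv.
Proof.
case=> [|m] [|n] //=.
- by move=> /esym/eqP; rewrite invr_eq0 pnatr_eq0.
- by move=> /eqP; rewrite invr_eq0 pnatr_eq0.
by move/invr_inj/eqP; rewrite eqr_nat => /eqP [->].
Qed.

Lemma pt_inj : injective pt.
Proof. by move=> m n /(congr1 sval) /ptv_inj. Qed.

Lemma S_setE (x : R) : S_set R x -> exists k, x = ptv k.
Proof. by case=> [->|[k ->]]; [exists 0%N | exists k.+1]. Qed.

Lemma pt_surj (s : S R) : exists k, s = pt k.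
Proof.
case: s => x xS; have [k xk] := S_setE _ (set_mem xS).
exists k; apply: eq_sig_hprop => //=.

Qed.

Lemma S_set_ge0 x : S_set R x -> 0 <= x.
Proof. by case/S_setE => -[|k] ->; rewrite // ltW // ptv_gt0. Qed.

Lemma S_gap j x : S_set R x -> ptv j.+2 < x -> x < ptv j.+1 -> False.
Proof.
case/S_setE => -[|k] ->; first by rewrite ltNge ltW // ptv_gt0.
rewrite /= !ltf_pV2 ?posrE ?ltr0n // !ltr_nat.
by move=> h1 h2; move: (leq_ltn_trans h2 h1); rewrite ltnn.
Qed.

End A.

Section B.
Context {R : realType}.

Definition clamp (t : R) : R := Num.min 1 (Num.max 0 t).

Lemma clamp_ge0 t : 0 <= clamp t.
Proof. by rewrite /clamp le_min ler01 le_max lexx. Qed.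

Lemma clamp_le1 t : clamp t <= 1.
Proof. by rewrite /clamp ge_min lexx. Qed.

Definition segv k (x y : Delta R k) (t : R) : 'rV[R]_k.+1 :=
  sval x + clamp t *: (sval y - sval x).

Lemma segvP k x y t : segv k x y t \in simplex_set R k.
Proof.
have /set_mem [x0 x1] := svalP x; have /set_mem [y0 y1] := svalP y.
apply/mem_set; split.
  move=> i; rewrite /segv /= !mxE.
  have -> : sval x ord0 i + clamp t * (sval y ord0 i - sval x ord0 i) =
    (1 - clamp t) * sval x ord0 i + clamp t * sval y ord0 i.
    by rewrite mulrBr mulrBl mul1r addrA addrAC.
  by rewrite addr_ge0 // mulr_ge0 // ?clamp_ge0 // subr_ge0 clamp_le1.
rewrite /segv /=.
under eq_bigr do rewrite !mxE.
by rewrite big_split /= -mulr_sumr big_split /= sumrN x1 y1 subrr mulr0 addr0.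
Qed.

Definition seg k x y t : Delta R k := exist _ (segv k x y t) (segvP k x y t).

Lemma seg_continuous k x y : continuous (seg k x y).
Proof.
apply: (@continuous_comp_initial _ _ _ (@set_val _ (simplex_set R k))).
have -> : (set_val \o seg k x y) = (fun t => sval x + clamp t *: (sval y - sval x)).
  by apply: funext => t.
move=> t.
apply: (@continuousD _ _ _ (fun=> sval x) (fun t => clamp t *: (sval y - sval x))); first exact: cvg_cst.
apply: continuousZr_tmp.
apply: continuous_min; first exact: cvg_cst.
apply: continuous_max; first exact: cvg_cst.
exact: cvg_id.
Qed.


Lemma S_between u w : S_set R u -> S_set R w -> u < w ->
  exists v, [/\ u < v, v < w & ~ S_set R v].
Proof.
move=> Su /S_setE [[|j] ->] uw.
  by move: (S_set_ge0 _ Su); rewrite leNgt uw.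
have uj : u <= ptv j.+2.
  case/S_setE: Su uw => -[|i] -> //=.
  rewrite ltf_pV2 ?posrE ?ltr0n // ltr_nat => ji.
  by rewrite lef_pV2 ?posrE ?ltr0n // ler_nat.
have lt21 : (ptv j.+2 : R) < ptv j.+1.
  by rewrite /ptv ltf_pV2 ?posrE ?ltr0n // ltr_nat.
exists ((ptv j.+2 + ptv j.+1) / 2); have [h1 h2] := midf_lt lt21.
split => //; first exact: le_lt_trans uj h1.
by move=> /S_gap /(_ h1 h2).
Qed.

Lemma seg0 k x y : seg k x y 0 = x.
Proof.
apply: eq_sig_hprop => [? ? ?|/=]; first exact: Prop_irrelevance.
rewrite /segv.
rewrite (_ : clamp _ = 0); last by rewrite /clamp maxxx; apply/min_idPr; exact: ler01.
by rewrite scale0r addr0.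
Qed.

Lemma seg1 k x y : seg k x y 1 = y.
Proof.
apply: eq_sig_hprop => [? ? ?|/=]; first exact: Prop_irrelevance.
rewrite /segv.
rewrite (_ : clamp _ = 1); last by rewrite /clamp; have /max_idPr -> := @ler01 R; rewrite minxx.
by rewrite scale1r addrC subrK.
Qed.

Lemma const_S k (f : Delta R k -> S R) : continuous f -> forall x y, f x = f y.
Proof.
move=> cf x y; apply: contrapT => fxy.
pose h t := sval (f (seg k x y t)).
have ch : continuous h.
  move=> t; apply: (@continuous_comp _ _ _ (fun t => f (seg k x y t)) set_val).
    apply: continuous_comp; first exact: seg_continuous.
    exact: cf.
  exact: initial_continuous.
have Sh t : S_set R (h t) := set_mem (svalP (f (seg k x y t))).
have hneq : h 0 != h 1.
  apply/eqP; rewrite /h seg0 seg1 => e; apply: fxy; apply: eq_sig_hprop => // ? ? ?; exact: Prop_irrelevance.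
have [v [v1 v2 nSv]] : exists v, [/\ Num.min (h 0) (h 1) < v, v < Num.max (h 0) (h 1) & ~ S_set R v].
  apply: S_between; first by rewrite /Order.min; case: ifP.
    by rewrite /Order.max; case: ifP.
  rewrite /Order.min /Order.max.
  by case: (ltgtP (h 0) (h 1)) => [lt|lt|eq] //; rewrite eq eqxx in hneq.
have [c _ hc] := @IVT R h 0 1 v ler01 (continuous_subspaceT ch) (introT andP (conj (ltW v1) (ltW v2))).
by apply: nSv; rewrite -hc.
Qed.

End B.

Section C.
Context {R : realType}.

Local Notation SS k := (SingSimp R k (S R)).

Definition vtxv k : 'rV[R]_k.+1 := \row_j (if j == ord0 then 1 else 0).

Lemma vtxvP k : vtxv k \in simplex_set R k.
Proof.
apply/mem_set; split.
  by move=> i; rewrite mxE; case: ifP => _ //; exact: ler01.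
rewrite (bigD1 ord0) //= mxE eqxx big1 ?addr0 // => i /negPf ni0.
by rewrite mxE ni0.
Qed.

Definition vtx k : Delta R k := exist _ (vtxv k) (vtxvP k).

Definition ev k (s : SS k) : S R := (sval s : Delta R k -> S R) (vtx k).

Definition cnst k (s : S R) : SS k :=
  exist _ ((fun _ => s) : {compact-open, Delta R k -> S R})
    (mem_set (@cst_continuous _ _ s)).

Lemma ev_cnst k s : ev k (cnst k s) = s.
Proof. by []. Qed.

Lemma SS_cont {k} (s : SS k) : continuous (sval s : Delta R k -> S R).
Proof. exact: set_mem (svalP s). Qed.

Lemma SS_valE {k} (s : SS k) x : (sval s : Delta R k -> S R) x = ev k s.
Proof. exact: (const_S _ _ (SS_cont s)). Qed.

Lemma cnst_ev {k} (s : SS k) : cnst k (ev k s) = s.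
Proof.
apply: eq_sig_hprop => [? ? ?|/=]; first exact: Prop_irrelevance.
by apply: funext => x; rewrite SS_valE.
Qed.

Lemma ev_inj k : injective (ev k).
Proof. by move=> s t e; rewrite -(cnst_ev s) -(cnst_ev t) e. Qed.

Lemma fpE k (i : 'I_k.+2) (A : set (SS k)) :
  face_preim i A = [set s | A (cnst k (ev k.+1 s))].
Proof.
rewrite /face_preim; apply/seteqP; split => s /=.
  case=> t [At tE].
  have e : cnst k (ev k.+1 s) = t.
    by apply: (@ev_inj k); rewrite ev_cnst [ev k t]/ev tE SS_valE.
  by rewrite e.
move=> Ac; exists (cnst k (ev k.+1 s)); split => // x /=.
by rewrite SS_valE.
Qed.

End C.

Section D.
Context {R : realType}.

Local Notation SS k := (SingSimp R k (S R)).

Lemma open_S_neq (s : S R) : open (~` [set s]).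
Proof.
exists (~` [set sval s]).
  apply: closed_openC; apply: accessible_closed_set1.
  exact/hausdorff_accessible/Rhausdorff.
apply/seteqP; split => t /=.
  by move=> ne ts; apply: ne; rewrite ts.
by move=> ne e; apply: ne; apply: eq_sig_hprop => // ? ? ?; exact: Prop_irrelevance.
Qed.

Lemma open_SS_neq k (s : SS k) : open (~` [set s]).
Proof.
exists [set g : {compact-open, Delta R k -> S R} | g @` [set vtx k] `<=` ~` [set ev k s]].
  apply: compact_open_open; [exact: compact_set1 | exact: open_S_neq].
apply/seteqP; split => t /=.
  move=> h ts; apply: (h (ev k t)); last by rewrite ts.
  by exists (vtx k).
move=> ne _ [x -> <-] /= e; apply: ne; apply: (ev_inj k); exact: e.
Qed.

Lemma borel_all k (A : set (SS k)) : borel A.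
Proof.
have [B0 BC BU] := @smallest_sigma_algebra _ setT [set U : set (SS k) | open U].
have hs (s : SS k) : borel [set s].
  rewrite /borel (_ : [set s] = setT `\` ~` [set s]); last by rewrite setTD setCK.
  apply: BC; apply: sub_sigma_algebra.
  exact: open_SS_neq.
have -> : A = \bigcup_n (A `&` [set cnst k (pt n)]).
  apply/seteqP; split => [s As|s [n _ [As _]]] //.
  have [n sn] := pt_surj (ev k s).
  by exists n => //; split => //=; rewrite -sn cnst_ev.
apply: BU => n.
have [h|h] := pselect (A (cnst k (pt n))).
  have -> : A `&` [set cnst k (pt n)] = [set cnst k (pt n)].
    by apply/seteqP; split => s /=; [case | move=> ->].
  exact: hs.
have -> : A `&` [set cnst k (pt n)] = set0.
  by apply/seteqP; split => s //= [As e]; apply: h; rewrite -e.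
exact: B0.
Qed.

End D.

Section E.
Context {R : realType}.

Local Notation SS k := (SingSimp R k (S R)).

Lemma nbhs_pt0 (B : set (S R)) : nbhs (pt 0) B ->
  exists N, forall n, (N <= n)%N -> B (pt n).
Proof.
move=> /nbhs_ballP [e /= e0 eB].
exists (Num.truncn e^-1).+1 => n Nn; apply: eB.
change (ball (0:R) e (ptv n)); rewrite -ball_normE /ball_ /= sub0r normrN.
case: n Nn => // m Nm; rewrite /= ger0_norm ?invr_ge0 ?ler0n //.
rewrite -[e]invrK ltf_pV2 ?posrE ?ltr0n ?invr_gt0 //.
apply: lt_le_trans (truncnS_gt _) _; rewrite ler_nat; exact: Nm.
Qed.


Lemma S_compact : compact [set: S R].
Proof.
move=> F PF _.
have [c0|nc0] := pselect (cluster F (pt 0)); first by exists (pt 0).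
have [A [B [FA nB AB]]] : exists A B, [/\ F A, nbhs (pt 0) B & A `&` B = set0].
  apply: contrapT => H; apply: nc0 => A B FA nB.
  by apply/set0P/negP => /eqP AB; apply: H; exists A, B.
have [N hN] := nbhs_pt0 _ nB.
pose C := (@pt R) @` `I_N.
have AC : A `<=` C.
  move=> s As; have [n sn] := pt_surj s; exists n; last by rewrite sn.
  rewrite /= ltnNge; apply/negP => Nn.
  have : (A `&` B) s by split => //; rewrite sn; exact: hN.
  by rewrite AB.
have cC : compact C by apply: finite_compact; apply: finite_image; exact: finite_II.
have [x [Cx clx]] := cC F PF (filterS AC FA).
by exists x.
Qed.


Lemma cnst_continuous k : continuous (@cnst R k).
Proof.
apply: (@continuous_comp_initial _ _ _
  (@set_val _ [set f : {compact-open, Delta R k -> S R} | continuous f])).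
move=> s; apply/compact_open_cvgP.
  exact: (@fmap_filter _ _ (set_val \o cnst k) (nbhs s) (@nbhs_filter (S R) s)).
move=> K O cK oO hKO.
have [[x Kx]|K0] := pselect (K !=set0).
  have Os : O s by apply: hKO; exists x.
  apply: (filterS _ (open_nbhs_nbhs (conj oO Os))).
  by move=> t Ot _ [y _ <-].
apply: (filterS _ (open_nbhs_nbhs (conj (@openT (S R)) (I : setT s)))).
move=> t _ z [y Ky _]; exfalso; apply: K0; by exists y.
Qed.

Lemma SS_compact k : compact [set: SS k].
Proof.
have -> : [set: SS k] = cnst k @` setT.
  by apply/seteqP; split => s // _; exists (ev k s) => //; rewrite cnst_ev.
apply: continuous_compact; last exact: S_compact.
exact/continuous_subspaceT/cnst_continuous.
Qed.

End E.

Section F.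
Context {R : realType}.

Local Notation SS k := (SingSimp R k (S R)).

Lemma alt_odd n : \sum_(i < n) (-1) ^+ i = (odd n)%:R :> R.
Proof.
elim: n => [|n IH]; first by rewrite big_ord0.
rewrite big_ord_recr /= IH -signr_odd.
by case: (odd n) => /=; rewrite ?expr1 ?expr0 ?subrr ?add0r.
Qed.

Lemma bdE k (c : set (SS k.+1) -> R) A :
  MTboundary c A = (odd k.+2)%:R * c [set s | A (cnst k (ev k.+1 s))].
Proof.
rewrite /MTboundary; under eq_bigr do rewrite fpE.
by rewrite -mulr_suml alt_odd.
Qed.

Lemma sbm_chain k (c : set (SS k) -> R) :
  signed_borel_measure c -> MTchain c.
Proof.
move=> hc; split => //; exists setT; split; first exact: SS_compact.
move=> B _ BT; have -> : B = set0.
  by apply/seteqP; split => [s /BT /(_ I)|].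
by case: hc.
Qed.

Lemma sbm_pf i j (phi : SS i -> SS j) (c : set (SS i) -> R) :
  signed_borel_measure c -> signed_borel_measure (fun B => c (phi @^-1` B)).
Proof.
move=> [c0 cU]; split; first by rewrite preimage_set0.
move=> F _ tF; rewrite preimage_bigcup; apply: cU.
  by move=> n; exact: borel_all.
move=> m n _ _ [s [Fm Fn]]; apply: tF => //; by exists (phi s).
Qed.

Lemma sbm_zero k : signed_borel_measure (fun _ : set (SS k) => 0 : R).
Proof.
split => // F _ _.
have -> : (fun n => \sum_(i < n) (0 : R)) = fun _ => 0.
  by apply: funext => n; rewrite big1.
exact: cvg_cst.
Qed.

Lemma part1 m (c : set (SS m.+1) -> R) :
  MTchain c -> meq (MTboundary c) (fun _ => 0) ->
  exists d : set (SS m.+2) -> R, MTchain d /\ meq (MTboundary d) c.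
Proof.
move=> [hc _] bc.
case/boolP: (odd m) => om.
  exists (fun _ => 0); split; first exact/sbm_chain/sbm_zero.
  move=> A _; rewrite bdE mulr0.
  have := bc [set t | A (cnst m.+1 (ev m t))] (borel_all _ _).
  rewrite bdE /= om mul1r => <-; congr c.
  by apply/seteqP; split => s /=; rewrite cnst_ev.
exists (fun B => c ((fun s => cnst m.+2 (ev m.+1 s)) @^-1` B)); split.
  exact/sbm_chain/sbm_pf.
move=> A _; rewrite bdE /= (negbTE om) mul1r; congr c.
by apply/seteqP; split => s /=; rewrite ?ev_cnst cnst_ev.
Qed.

End F.

Section G.
Context {R : realType} (a : nat -> R).
Hypothesis ha : cvgn (series (fun k => `|a k|)).

Definition wt (P : set nat) k : R := if `[< P k >] then a k else 0.
Definition II (P : set nat) := limn (series (wt P)).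

Lemma wt_norm P k : `|wt P k| <= `|a k|.
Proof. by rewrite /wt; case: ifP => _ //; rewrite normr0. Qed.

Lemma nwt_cvg P : cvgn (series (fun k => `|wt P k|)).
Proof.
apply: (series_le_cvg _ _ _ ha) => k //; exact: wt_norm.
Qed.

Lemma wt_cvg P : cvgn (series (wt P)).
Proof. apply: normed_cvg; exact: nwt_cvg. Qed.

Lemma II_norm P : `|II P| <= limn (series (fun k => `|wt P k|)).
Proof. exact: lim_series_norm (nwt_cvg P). Qed.

Lemma II_set0 : II set0 = 0.
Proof.
rewrite /II (_ : wt set0 = fun=> 0); last first.
  by apply: funext => k; rewrite /wt asboolF.
rewrite (_ : series _ = fun=> 0); first exact: lim_cst.
by apply: funext => n; rewrite /series /= big1.
Qed.

Lemma IIU P Q : P `&` Q = set0 -> II (P `|` Q) = II P + II Q.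
Proof.
move=> PQ; rewrite /II.
have -> : wt (P `|` Q) = wt P + wt Q; last exact: lim_seriesD (wt_cvg P) (wt_cvg Q).
apply: funext => k; rewrite /wt /= !fctE.
case: (pselect (P k)) => Pk; case: (pselect (Q k)) => Qk.
- by have : (P `&` Q) k by []; rewrite PQ.
- by rewrite (asboolT (or_introl Pk)) (asboolT Pk) (asboolF Qk) addr0.
- by rewrite (asboolT (or_intror Qk)) (asboolF Pk) (asboolT Qk) add0r.
- have nPQ : ~ (P k \/ Q k) by case.
  by rewrite (asboolF nPQ) (asboolF Pk) (asboolF Qk) addr0.
Qed.


Local Notation sa := (series (fun k => `|a k|)).

Lemma sa_le n : sa n <= limn sa.
Proof.
apply: nondecreasing_cvgn_le => //.
exact: (@nondecreasing_series _ (fun k => `|a k|) xpredT 0%N).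
Qed.

Lemma tail_bound D K : (forall k, (k < K)%N -> ~ D k) ->
  limn (series (fun k => `|wt D k|)) <= limn sa - sa K.
Proof.
move=> hD; apply: limr_le; first exact: nwt_cvg.
near=> n.
have Kn : (K <= n)%N by near: n; exists K.
rewrite /series /= (@big_cat_nat _ _ _ K) //=.
rewrite big_nat_cond big1 ?add0r; last first.
  move=> k /andP[/andP[_ kK] _]; rewrite /wt asboolF ?normr0 //; exact: hD.
apply: le_trans (_ : \sum_(K <= k < n) `|a k| <= _).
  by apply: ler_sum => k _; exact: wt_norm.
rewrite -sub_series_geq //; apply: lerB => //; exact: sa_le.
Unshelve. all: by end_near.
Qed.


Lemma II_sigma (P : nat -> set nat) : trivIset setT P ->
  (fun N => \sum_(n < N) II (P n)) @ \oo --> II (\bigcup_n P n).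
Proof.
move=> tP; set Q := \bigcup_n P n.
pose QN N := [set k | exists2 n, (n < N)%N & P n k].
have sumE N : \sum_(n < N) II (P n) = II (QN N).
  elim: N => [|N IH].
    rewrite big_ord0 (_ : QN 0%N = set0) ?II_set0 //.
    by apply/seteqP; split => k // [].
  rewrite big_ord_recr /= IH -IIU.
    congr II; apply/seteqP; split => k /=.
      case=> [[n nN Pnk]|PNk]; last by exists N.
      by exists n => //; exact: ltn_trans nN (ltnSn N).
    case=> n; rewrite ltnS leq_eqVlt => /orP[/eqP->|nN] Pnk; [by right|left].
    by exists n.
  apply/seteqP; split => k // [[n nN Pnk] PNk].
  have nNe : n = N by apply: tP => //; exists k.
  by move: nN; rewrite nNe ltnn.
have -> : (fun N => \sum_(n < N) II (P n)) = fun N => II (QN N).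
  by apply: funext => N; exact: sumE.
apply/cvgrPdist_le => e e0.
have [K _ hK] := (cvgrPdist_le _ _).1 ha e e0.
have {}hK : limn sa - sa K <= e.
  by apply: le_trans (hK K (leqnn K)); exact: ler_norm.
have [N0 hN0] : exists N0, forall k, (k < K)%N -> Q k -> QN N0 k.
  elim: (K) => [|K' [N1 hN1]]; first by exists 0%N.
  have [[n _ PnK']|nQ] := pselect (Q K').
    exists (maxn N1 n.+1) => k; rewrite ltnS leq_eqVlt => /orP[/eqP->|kK] Qk.
      by exists n => //; rewrite leq_max leqnn orbT.
    have [m mN1 Pmk] := hN1 k kK Qk; exists m => //.
    by rewrite leq_max mN1.
  exists N1 => k; rewrite ltnS leq_eqVlt => /orP[/eqP->|kK] Qk //.
  exact: hN1.
near=> N.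
have N0N : (N0 <= N)%N by near: N; exists N0.
have QNQ : QN N `<=` Q by move=> k [n _ Pnk]; exists n.
have QE : Q = QN N `|` (Q `\` QN N).
  apply/seteqP; split => k.
    by move=> Qk; case: (pselect (QN N k)) => h; [left|right].
  by case=> [/QNQ|[]].
rewrite [in II Q]QE IIU; last by apply/seteqP; split => k // [? []].
rewrite addrC addKr.
apply: le_trans (II_norm _) _; apply: le_trans hK.
apply: tail_bound => k kK [Qk nQN]; apply: nQN.
have [n nN0 Pnk] := hN0 k kK Qk; exists n => //; exact: leq_trans nN0 N0N.
Unshelve. all: by end_near.
Qed.


Lemma II_set1 k : II [set k] = a k.
Proof.
rewrite /II; apply: (cvg_lim (@Rhausdorff R)); apply: cvg_near_cst; near=> n.
have kn : (k < n)%N by near: n; exists k.+1.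
rewrite /series /= (@big_cat_nat _ _ _ k.+1) //= big_nat_recr //= big_nat_cond big1.
  rewrite add0r big_nat_cond big1 ?addr0 /wt ?asboolT //.
  move=> i /andP[/andP[ki _] _]; rewrite asboolF // => ik.
  by move: ki; rewrite ik ltnn.
move=> i /andP[/andP[_ ik] _]; rewrite /wt asboolF // => ike.
by move: ik; rewrite ike ltnn.
Unshelve. all: by end_near.
Qed.

End G.

Section H.
Context {R : realType}.

Local Notation SS k := (SingSimp R k (S R)).

Definition sgm (k : nat) : SS 0 := cnst 0 (@pt R k).

Lemma sig_inj : injective sgm.
Proof. by move=> m n /(congr1 (ev 0)); rewrite /sgm !ev_cnst; exact: pt_inj. Qed.

Lemma sig_surj (s : SS 0) : exists k, s = sgm k.
Proof. by have [k e] := pt_surj (ev 0 s); exists k; rewrite /sgm -e cnst_ev. Qed.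

Lemma point_decomp (c : set (SS 0) -> R) : signed_borel_measure c -> forall A,
  (fun N => \sum_(n < N) c (A `&` [set sgm n])) @ \oo --> c A.
Proof.
move=> [_ cU] A.
have eA : \bigcup_n (A `&` [set sgm n]) = A.
  apply/seteqP; split => [s [n _ [As _]]|s As] //.
  by have [n sn] := sig_surj s; exists n => //; split.
have h := cU (fun n => A `&` [set sgm n]) (fun n => borel_all _ _).
rewrite eA in h; apply: h.
move=> m n _ _ [s [[_ /= e1] [_ /= e2]]].
by apply: sig_inj; rewrite -e1 -e2.
Qed.


Definition Phi (c : set (SS 0) -> R) : nat -> R := fun k => c [set sgm k].

Lemma Phi_ell1 c : MTchain c -> ell1 (Phi c).
Proof.
move=> [hc _]; have c0 : c set0 = 0 by case: hc.
pose Ap := [set s | 0 <= c [set s]]; pose An := [set s | c [set s] < 0].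
have hp := point_decomp _ hc Ap; have hn := point_decomp _ hc An.
have e : (fun n => \sum_(k < n) `|Phi c k|) =
    (fun N => \sum_(n < N) c (Ap `&` [set sgm n])) -
    (fun N => \sum_(n < N) c (An `&` [set sgm n])).
  apply: funext => N; rewrite !fctE -sumrB; apply: eq_bigr => k _.
  rewrite /Phi; have [ge|lt] := leP 0 (c [set sgm k]).
    rewrite ger0_norm //.
    have -> : Ap `&` [set sgm k] = [set sgm k].
      by apply/seteqP; split => s; [case|move=> ->].
    have -> : An `&` [set sgm k] = set0.
      by apply/seteqP; split => s // [h ek]; move: h; rewrite /An /= ek => /(le_lt_trans ge); rewrite ltxx.
    by rewrite c0 subr0.
  rewrite ltr0_norm //.
  have -> : Ap `&` [set sgm k] = set0.
    by apply/seteqP; split => s // [h ek]; move: h; rewrite /Ap /= ek => /(lt_le_trans lt); rewrite ltxx.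
  have -> : An `&` [set sgm k] = [set sgm k].
    by apply/seteqP; split => s; [case|move=> ->].
  by rewrite c0 sub0r.
rewrite /ell1 e; apply: is_cvgB; [exact: cvgP hp | exact: cvgP hn].
Qed.

Lemma Phi_bd c : (exists d : set (SS 1) -> R, MTchain d /\ meq (MTboundary d) c) ->
  Phi c = (fun _ => 0).
Proof.
move=> [d [_ hd]]; apply: funext => k; rewrite /Phi -hd ?bdE ?mul0r //.
exact: borel_all.
Qed.

Lemma Phi0_bd c : MTchain c -> Phi c = (fun _ => 0) ->
  exists d : set (SS 1) -> R, MTchain d /\ meq (MTboundary d) c.
Proof.
move=> [hc _] P0; exists (fun _ => 0); split; first exact/sbm_chain/sbm_zero.
move=> A _; rewrite bdE mul0r.
have := point_decomp _ hc A.
have -> : (fun N => \sum_(n < N) c (A `&` [set sgm n])) = fun _ => 0.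
  apply: funext => N; apply: big1 => n _.
  have [An|nAn] := pselect (A (sgm n)).
    have -> : A `&` [set sgm n] = [set sgm n].
      by apply/seteqP; split => s; [case|move=> ->].
    exact: (congr1 (fun f => f (nat_of_ord n)) P0).
  have -> : A `&` [set sgm n] = set0.
    by apply/seteqP; split => s // [As e]; apply: nAn; rewrite -e.
  by case: hc.
by move/(cvg_lim (@Rhausdorff R)); rewrite lim_cst.
Qed.


Lemma Phi_surj a : ell1 a -> exists c, MTchain c /\ Phi c = a.
Proof.
move=> ea.
have ha : cvgn (series (fun k => `|a k|)) by rewrite seriesEord.
exists (fun A => II a [set k | A (sgm k)]); split.
  apply: sbm_chain; split.
    rewrite /= (_ : [set k | set0 (sgm k)] = set0); first exact: II_set0.
    by apply/seteqP; split => k.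
  move=> F _ tF /=.
  have -> : [set k | (\bigcup_n F n) (sgm k)] = \bigcup_n [set k | F n (sgm k)].
    by apply/seteqP; split => k /= [n _ h]; exists n.
  apply: (II_sigma a ha).
  move=> m n _ _ [k [h1 h2]]; apply: tF => //; by exists (sgm k).
apply: funext => k; rewrite /Phi.
have -> : [set j | [set sgm k] (sgm j)] = [set k].
  by apply/seteqP; split => j /=; [move/sig_inj|move=> ->].
exact: II_set1 a k.
Qed.

End H.

Theorem lemma2 (R : realType) :
  (* H_n(S) = 0 for n = m+1 > 0: every n-cycle is an n-boundary *)
  (forall (m : nat) (c : set (SingSimp R m.+1 (S R)) -> R),
      MTchain c -> meq (MTboundary c) (fun _ => 0) ->
      exists d : set (SingSimp R m.+2 (S R)) -> R,
        MTchain d /\ meq (MTboundary d) c) /\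
  (* H_0(S) = C_0(S) / B_0(S) is isomorphic to l^1 as a real vector space *)
  (exists Phi : (set (SingSimp R 0 (S R)) -> R) -> (nat -> R),
      (forall c, MTchain c -> ell1 (Phi c)) /\
      (forall c c', MTchain c -> MTchain c' -> meq c c' -> Phi c = Phi c') /\
      (forall c c', MTchain c -> MTchain c' ->
         Phi (fun A => c A + c' A) = (fun k => Phi c k + Phi c' k)) /\
      (forall (r : R) c, MTchain c ->
         Phi (fun A => r * c A) = (fun k => r * Phi c k)) /\
      (forall c, MTchain c ->
         (Phi c = (fun _ => 0) <->
          exists d : set (SingSimp R 1 (S R)) -> R, MTchain d /\ meq (MTboundary d) c)) /\
      (forall a : nat -> R, ell1 a -> exists c, MTchain c /\ Phi c = a)).
Proof.
split; first exact: part1.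
exists Phi; split; first exact: Phi_ell1.
split.
  move=> c c' _ _ e; apply: funext => k; rewrite /Phi; apply: e; exact: borel_all.
split; first by [].
split; first by [].
split; last exact: Phi_surj.
move=> c hc; split; [exact: Phi0_bd hc | exact: Phi_bd].
Qed.
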